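(* Let $G=(V,E)$ be an undirected graph with non-negative edge weights, let $S\subseteq V$ be non-empty, let $u,v\in V$ and let $P(u,v)$ be a shortest path between $u$ and $v$ in $G$. If $P(u,v)$ is not contained in $G_S$, then $\max(h_S(u),h_S(v))\le d_G(u,v)$.
   Context: $d_G(u,v)$ is the shortest-path distance in $G$; $h_S(u)=\min_{s\in S}d_G(u,s)$. For $v\in V$, $E_S(v)$ is the set of edges incident to $v$ whose weight is at most $h_S(v)$; $E_S=\bigcup_{v\in V}E_S(v)$ and $G_S=(V,E_S)$. ''$P(u,v)$ is contained in $G_S$'' means every edge of $P(u,v)$ is in $E_S$. *)

(* Defs.v *)
From HB Require Import structures.
From mathcomp Require Import all_boot all_order all_algebra.
From mathcomp Require Import classical_sets boolp reals constructive_ereal ereal.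
Set Implicit Arguments. Unset Strict Implicit. Unset Printing Implicit Defensive.
Import Order.TTheory GRing.Theory Num.Theory.
Local Open Scope classical_set_scope.
Local Open Scope ring_scope.

Definition wgraph (R : realType) (V : finType) (e : rel V) (w : V -> V -> R) :=
  [/\ symmetric e,
      (forall x y, w x y = w y x) & (forall x y, e x y -> 0 <= w x y)].

(* A walk from x is a sequence p of the vertices after x; it is a walk in G if
   consecutive vertices are adjacent. Its weight is the sum of edge weights. *)
Definition walk_weight (R : realType) (V : finType) (w : V -> V -> R)
    (x : V) (p : seq V) : R :=
  \sum_(ab <- zip (x :: p) p) w ab.1 ab.2.

Definition is_walk (V : finType) (e : rel V) (x y : V) (p : seq V) :=
  path e x p && (last x p == y).

(* Shortest-path distance d_G(x,y) in \bar R (+oo if no walk). *)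
Definition dG (R : realType) (V : finType) (e : rel V) (w : V -> V -> R)
    (x y : V) : \bar R :=
  ereal_inf [set (walk_weight w x p)%:E | p in [set p | is_walk e x y p]].

Definition hS (R : realType) (V : finType) (e : rel V) (w : V -> V -> R)
    (S : {set V}) (x : V) : \bar R :=
  ereal_inf [set dG e w x s | s in [set s | s \in S]].

Definition in_ES_at (R : realType) (V : finType) (e : rel V) (w : V -> V -> R)
    (S : {set V}) (v x : V) : Prop :=
  e v x /\ ((w v x)%:E <= hS e w S v)%E.

Definition in_ES (R : realType) (V : finType) (e : rel V) (w : V -> V -> R)
    (S : {set V}) (x y : V) : Prop :=
  in_ES_at e w S x y \/ in_ES_at e w S y x.

Definition contained_in_GS (R : realType) (V : finType) (e : rel V)
    (w : V -> V -> R) (S : {set V}) (x : V) (p : seq V) : Prop :=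
  forall ab, ab \in zip (x :: p) p -> in_ES e w S ab.1 ab.2.

Definition shortest_path (R : realType) (V : finType) (e : rel V)
    (w : V -> V -> R) (x y : V) (p : seq V) : Prop :=
  [/\ is_walk e x y p, uniq (x :: p) & (walk_weight w x p)%:E = dG e w x y].

(* Main.v *)
Require Import Defs.
From mathcomp Require Import all_boot all_order all_algebra.
From mathcomp Require Import classical_sets boolp reals constructive_ereal ereal.
Import Order.TTheory GRing.Theory Num.Theory.
Local Open Scope ring_scope.
Set Implicit Arguments. Unset Strict Implicit.

Section Aux.
Variables (R : realType) (V : finType) (e : rel V) (w : V -> V -> R).

Lemma split_zip (x : V) p a b : (a, b) \in zip (x :: p) p ->
  exists l1 l2, p = l1 ++ b :: l2 /\ last x l1 = a.
Proof.
elim: p x => [|z p IH] x //=.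
rewrite in_cons => /orP[/eqP [-> ->]|/IH [l1 [l2 [-> <-]]]].
  by exists [::], p.
by exists (z :: l1), l2.
Qed.

Lemma path_zip (x : V) p a b : path e x p -> (a, b) \in zip (x :: p) p -> e a b.
Proof.
elim: p x => [|z p IH] x //= /andP[exz pz].
rewrite in_cons => /orP[/eqP [-> ->] //|]; exact: IH.
Qed.

Lemma ww_cons (x z : V) p : walk_weight w x (z :: p) = w x z + walk_weight w z p.
Proof. by rewrite /walk_weight /= big_cons. Qed.

Lemma ww_cat (x : V) l1 l2 :
  walk_weight w x (l1 ++ l2) = walk_weight w x l1 + walk_weight w (last x l1) l2.
Proof.
elim: l1 x => [|z l1 IH] x /=.
  by rewrite /walk_weight /= big_nil add0r.
by rewrite !ww_cons IH addrA.
Qed.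

Lemma ww_ge0 (x : V) p : (forall a b, e a b -> 0 <= w a b) -> path e x p ->
  0 <= walk_weight w x p.
Proof.
move=> H; elim: p x => [|z p IH] x /=.
  by rewrite /walk_weight big_nil.
move=> /andP[exz pz]; rewrite ww_cons addr_ge0 //; [exact: H|exact: IH].
Qed.

Lemma dG_le (x y : V) p : is_walk e x y p -> (dG e w x y <= (walk_weight w x p)%:E)%E.
Proof. by move=> H; apply: ereal_inf_lbound; exists p. Qed.

Lemma zip_rcons_cons (y x : V) s :
  zip (y :: rcons s x) (rcons s x) = rcons (zip (y :: s) s) (last y s, x).
Proof. by elim: s y => [|z s IH] y //=; rewrite IH. Qed.

Lemma zip_rev (x : V) p : zip (last x p :: rev (belast x p)) (rev (belast x p)) =
  rev [seq (ab.2, ab.1) | ab <- zip (x :: p) p].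
Proof.
elim: p x => [|z p IH] x //=.
rewrite rev_cons zip_rcons_cons IH rev_cons.
congr rcons; congr pair.
by case: p {IH} => [|y p] //=; rewrite rev_cons last_rcons.
Qed.

Lemma core (S : {set V}) (x : V) p (a b : V) :
  (forall a b, e a b -> 0 <= w a b) -> path e x p ->
  (a, b) \in zip (x :: p) p -> (hS e w S a < (w a b)%:E)%E ->
  (hS e w S x <= (walk_weight w x p)%:E)%E.
Proof.
move=> H0 px ab /ereal_inf_lt [y [s /= sS <-]] /ereal_inf_lt [y' [q /= qw <-]].
rewrite lte_fin => qlt.
have [l1 [l2 [pE la]]] := @split_zip x p a b ab.
have wx : is_walk e x s (l1 ++ q).
  move: qw px; rewrite /is_walk pE !cat_path last_cat la.
  by case/andP=> -> -> /andP[-> _].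
apply: (le_trans (ereal_inf_lbound _)); first by exists s.
apply: (le_trans (dG_le wx)).
rewrite lee_fin pE !ww_cat la ww_cons lerD2l.
have : 0 <= walk_weight w b l2.
  apply: ww_ge0 => //; move: px; rewrite pE cat_path /= => /andP[_ /andP[_ Hp]]; exact: Hp.
move=> H; apply: ltW; apply: (lt_le_trans qlt); rewrite lerDl //.
Qed.

End Aux.

Theorem lemma4 (R : realType) (V : finType) (e : rel V) (w : V -> V -> R)
    (S : {set V}) (u v : V) (p : seq V) :
  wgraph e w -> S != finset.set0 -> shortest_path e w u v p ->
  ~ contained_in_GS e w S u p ->
  (maxe (hS e w S u) (hS e w S v) <= dG e w u v)%E.
Proof.
move=> [esym wsym w0] _ [wk _ <-] /existsNP [[a b]] /not_implyP [ab nES].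
have /andP [pu /eqP lv] := wk.
have eab : e a b := path_zip pu ab.
have ha : (hS e w S a < (w a b)%:E)%E.
  by rewrite ltNge; apply/negP => H; apply: nES; left.
have hb : (hS e w S b < (w b a)%:E)%E.
  by rewrite ltNge; apply/negP => H; apply: nES; right; split => //; rewrite esym.
rewrite ge_max; apply/andP; split; first exact: (core w0 pu ab ha).
have prev : path e v (rev (belast u p)).
  by rewrite -lv rev_path; rewrite (eq_path (e' := e)) // => x y; rewrite esym.
have bamem : (b, a) \in zip (v :: rev (belast u p)) (rev (belast u p)).
  by rewrite -lv zip_rev mem_rev; apply/mapP; exists (a, b).
apply: (le_trans (core w0 prev bamem hb)).
rewrite /walk_weight -lv zip_rev big_rev big_map.
rewrite le_eqVlt; apply/orP; left; apply/eqP; congr (_%:E).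
by apply: eq_bigr => i _; apply: wsym.
Qed.
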